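(* Let $L\ge1$ be an integer, let $K_1,\dots,K_L\subseteq[N]$ be pairwise disjoint, $x_0=\sum_{i=1}^L i\,\mathbb{1}_{K_i}$, $K=\bigcup_{i=1}^LK_i$, and $A\in\mathbb{R}^{m\times N}$. The following are equivalent: (i) $\ker(A)\cap N^+\cap H_{K_L,K^C}=\{0\}$; (ii) $x_0$ is the unique solution of $\min\|x\|_1$ subject to $Ax=Ax_0$ and $x\in[0,L]^N$.
   Context: $\mathbb{1}_S$ has entries $1$ on $S$, $0$ elsewhere; $K^C=[N]\setminus K$. $N^+=\{w\in\mathbb{R}^N:\sum_{i=1}^Nw_i\le0\}$, $H_{K_L,K^C}=\{w\in\mathbb{R}^N: w_i\le0\text{ for } i\in K_L,\ w_i\ge0\text{ for } i\in K^C\}$. ''Unique solution'' means unique minimizer. *)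

(* Defs.v *)
From mathcomp Require Import all_boot all_order all_algebra.
From mathcomp Require Import all_classical all_reals.
Set Implicit Arguments. Unset Strict Implicit. Unset Printing Implicit Defensive.
Import Order.TTheory GRing.Theory Num.Theory.
Local Open Scope ring_scope.

Definition l1norm (R : realType) (N : nat) (x : 'cV[R]_N) : R :=
  \sum_(j < N) `|x j 0|.

Definition Nplus (R : realType) (N : nat) : pred 'cV[R]_N :=
  fun w => \sum_(j < N) w j 0 <= 0.

Definition Hcone (R : realType) (N : nat) (KL KC : {set 'I_N}) : pred 'cV[R]_N :=
  fun w => [forall j, (j \in KL) ==> (w j 0 <= 0)] &&
           [forall j, (j \in KC) ==> (0 <= w j 0)].

Definition x0vec (R : realType) (N L : nat) (K : nat -> {set 'I_N}) : 'cV[R]_N :=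
  \col_j \sum_(1 <= i < L.+1) (i%:R * (j \in K i)%:R).

Definition Kunion (N L : nat) (K : nat -> {set 'I_N}) : {set 'I_N} :=
  \bigcup_(1 <= i < L.+1) K i.

Definition feasible (R : realType) (m N L : nat) (A : 'M[R]_(m, N))
  (b : 'cV[R]_m) (x : 'cV[R]_N) : Prop :=
  A *m x = b /\ forall j, 0 <= x j 0 <= L%:R.

Definition unique_l1_min (R : realType) (m N L : nat) (A : 'M[R]_(m, N))
  (b : 'cV[R]_m) (x : 'cV[R]_N) : Prop :=
  feasible L A b x /\
  forall y, feasible L A b y -> y != x -> l1norm x < l1norm y.

(* Main.v *)
Require Import Defs.
From mathcomp Require Import all_boot all_order all_algebra.
From mathcomp Require Import all_classical all_reals.
From mathcomp Require Import lra.
Import Order.TTheory GRing.Theory Num.Theory.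
Local Open Scope ring_scope.

Lemma x0_in (R : realType) (N L : nat) (K : nat -> {set 'I_N}) i j :
  (forall i k, (1 <= i <= L)%N -> (1 <= k <= L)%N -> i != k ->
     [disjoint K i & K k]) ->
  (1 <= i <= L)%N -> j \in K i -> x0vec R L K j 0 = i%:R.
Proof.
move=> Hd Hi Hj; rewrite mxE (bigD1_seq i) ?mem_index_iota ?iota_uniq //=.
rewrite Hj mulr1 big1_seq ?addr0 // => k /andP[Hki]; rewrite mem_index_iota ltnS /= => Hk.
by rewrite (disjointFr (Hd i k Hi Hk _) Hj) ?mulr0 // eq_sym.
Qed.

Lemma Kunion_in (N L : nat) (K : nat -> {set 'I_N}) i j :
  (1 <= i <= L)%N -> j \in K i -> j \in Kunion L K.
Proof.
move=> Hi Hj; rewrite /Kunion (bigD1_seq i) ?mem_index_iota ?iota_uniq //=.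
by rewrite inE Hj.
Qed.

Lemma Kunion_ex (N L : nat) (K : nat -> {set 'I_N}) j :
  j \in Kunion L K -> exists i, (1 <= i <= L)%N /\ j \in K i.
Proof.
rewrite /Kunion big_seq.
elim/big_rec: _ => [|i S Hi IH]; first by rewrite inE.
rewrite inE => /orP[Hj|/IH //]; exists i; split => //.
by move: Hi; rewrite mem_index_iota ltnS.
Qed.

Lemma x0_out (R : realType) (N L : nat) (K : nat -> {set 'I_N}) j :
  j \notin Kunion L K -> x0vec R L K j 0 = 0.
Proof.
move=> Hj; rewrite mxE big1_seq // => k; rewrite mem_index_iota ltnS /= => Hk.
case Hjk: (j \in K k); last by rewrite mulr0.
by move: Hj; rewrite (@Kunion_in N L K k j Hk Hjk).
Qed.

Lemma x0_cases (R : realType) (N L : nat) (K : nat -> {set 'I_N}) j :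
  (1 <= L)%N ->
  (forall i k, (1 <= i <= L)%N -> (1 <= k <= L)%N -> i != k ->
     [disjoint K i & K k]) ->
  [/\ 0 <= x0vec R L K j 0 <= L%:R,
      (x0vec R L K j 0 = L%:R -> j \in K L),
      (x0vec R L K j 0 = 0 -> j \in ~: Kunion L K),
      (j \in K L -> x0vec R L K j 0 = L%:R) &
      (j \in ~: Kunion L K -> x0vec R L K j 0 = 0)].
Proof.
move=> HL Hd.
have HKL : j \in K L -> x0vec R L K j 0 = L%:R.
  by move=> H; apply: x0_in => //; rewrite HL leqnn.
have HKc : j \in ~: Kunion L K -> x0vec R L K j 0 = 0.
  by rewrite inE => H; apply: x0_out.
case Hj: (j \in Kunion L K).
  have [i [Hi Hji]] := @Kunion_ex N L K j Hj.
  have Hx := @x0_in R N L K i j Hd Hi Hji; case/andP: Hi => Hi1 Hi2.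
  split => //; rewrite Hx.
  - by rewrite ler0n ler_nat.
  - by move/eqP; rewrite eqr_nat => /eqP Hi; rewrite -Hi.
  - by move/eqP; rewrite pnatr_eq0 => /eqP Hi; rewrite Hi in Hi1.
have Hx := @x0_out R N L K j (negbT Hj).
split => //; rewrite Hx.
- by rewrite lexx ler0n.
- by move/eqP; rewrite eq_sym pnatr_eq0 => /eqP HL0; rewrite HL0 in HL.
- by move=> _; rewrite inE Hj.
Qed.

Lemma x0_tri (R : realType) (N L : nat) (K : nat -> {set 'I_N}) j :
  (1 <= L)%N ->
  (forall i k, (1 <= i <= L)%N -> (1 <= k <= L)%N -> i != k ->
     [disjoint K i & K k]) ->
  (1 <= x0vec R L K j 0 /\ x0vec R L K j 0 + 1 <= L%:R) \/
   x0vec R L K j 0 = 0 \/ x0vec R L K j 0 = L%:R.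
Proof.
move=> HL Hd.
case Hj: (j \in Kunion L K); last by right; left; apply: x0_out; rewrite Hj.
have [i [Hi Hji]] := @Kunion_ex N L K j Hj.
rewrite (@x0_in R N L K i j Hd Hi Hji); case/andP: Hi => Hi1 Hi2.
case: (ltngtP i L) => HiL; last by right; right; rewrite HiL.
  by left; rewrite ler1n Hi1 natr1 ler_nat.
by rewrite leqNgt HiL in Hi2.
Qed.

Lemma l1norm_pos (R : realType) (N : nat) (x : 'cV[R]_N) :
  (forall j, 0 <= x j 0) -> l1norm x = \sum_(j < N) x j 0.
Proof. by move=> H; apply: eq_bigr => j _; rewrite ger0_norm. Qed.

Lemma entryDZ (R : realType) (N : nat) (x w : 'cV[R]_N) (t : R) j :
  (x + t *: w) j 0 = x j 0 + t * w j 0.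
Proof. by rewrite !mxE. Qed.

Theorem theorem4p2 (R : realType) (m N L : nat) (K : nat -> {set 'I_N})
  (A : 'M[R]_(m, N)) :
  (1 <= L)%N ->
  (forall i k, (1 <= i <= L)%N -> (1 <= k <= L)%N -> i != k ->
     [disjoint K i & K k]) ->
  ((forall w : 'cV[R]_N, A *m w = 0 -> Nplus w ->
      Hcone (K L) (~: Kunion L K) w -> w = 0)
   <->
   unique_l1_min L A (A *m x0vec R L K) (x0vec R L K)).
Proof.
move=> HL Hd.
set x0 := x0vec R L K.
have Hx0b : forall j, 0 <= x0 j 0 <= L%:R.
  by move=> j; have [] := @x0_cases R N L K j HL Hd.
have HL1 : (1 : R) <= L%:R by rewrite ler1n.
split.
- move=> H; split; first by split.
  move=> y [Hy Hyb] Hne; rewrite ltNge; apply/negP => Hle.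
  have Hw : y - x0 = 0.
    apply: H.
    + by rewrite mulmxBr Hy subrr.
    + have Ey : l1norm y = \sum_(j < N) y j 0.
        by apply: l1norm_pos => j; case/andP: (Hyb j).
      have Ex : l1norm x0 = \sum_(j < N) x0 j 0.
        by apply: l1norm_pos => j; case/andP: (Hx0b j).
      rewrite /Nplus (eq_bigr (fun j => y j 0 - x0 j 0)); last first.
        by move=> j _; rewrite 2!mxE.
      by rewrite sumrB -Ey -Ex subr_le0.
    + apply/andP; split; apply/forallP => j; apply/implyP => Hj; rewrite 2!mxE.
      * have [_ _ _ H1 _] := @x0_cases R N L K j HL Hd.
        rewrite /x0 (H1 Hj) subr_le0; by case/andP: (Hyb j).
      * have [_ _ _ _ H1] := @x0_cases R N L K j HL Hd.
        rewrite /x0 (H1 Hj) subr0; by case/andP: (Hyb j).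
  by move/eqP: Hne; apply; apply/eqP; rewrite -subr_eq0 Hw.
- move=> [_ Hmin] w Hw Hn Hc.
  apply/eqP; apply/negPn/negP => Hw0.
  set s := \sum_(j < N) `|w j 0|.
  have Hs : 0 <= s by apply: sumr_ge0 => j _.
  set t := (1 + s)^-1.
  have Ht : 0 < t by rewrite invr_gt0; lra.
  have Hwj : forall j, `|w j 0| <= s.
    by move=> j; rewrite /s (bigD1 j) //= lerDl sumr_ge0.
  have Htw : forall j, - 1 <= t * w j 0 <= 1.
    move=> j; have Hj := Hwj j.
    have Ht1 : t * (1 + s) = 1 by rewrite mulVf //; lra.
    have : t * `|w j 0| <= 1.
      rewrite -Ht1; apply: ler_wpM2l; lra.
    have -> : t * `|w j 0| = `|t * w j 0| by rewrite normrM ger0_norm ?ltW.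
    by move=> /ler_normlP [] ? ?; apply/andP; split; lra.
  case/andP: Hc => /forallP HcL /forallP HcC.
  set y := x0 + t *: w.
  have Hyf : feasible L A (A *m x0) y.
    split; first by rewrite mulmxDr -scalemxAr Hw scaler0 addr0.
    move=> j; rewrite entryDZ.
    have := Htw j; have := Hx0b j.
    have [_ H1 H2 _ _] := @x0_cases R N L K j HL Hd.
    rewrite -/x0 in H1 H2.
    have HLj := implyP (HcL j); have HCj := implyP (HcC j).
    move=> /andP [? ?] /andP [? ?].
    have := @x0_tri R N L K j HL Hd; rewrite -/x0.
    move=> [[? ?]|[H0|H0]].
    + apply/andP; split; lra.
    + have := HCj (H2 H0); rewrite /x0 H0 => ?.
      have : 0 <= t * w j 0 by apply: mulr_ge0; lra.
      move=> ?; apply/andP; split; lra.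
    + have := HLj (H1 H0); rewrite /x0 H0 => ?.
      have : t * w j 0 <= 0 by apply: mulr_ge0_le0; lra.
      move=> ?; apply/andP; split; lra.
  have Hne : y != x0.
    apply/negP => /eqP Hyx; move: Hyx; rewrite /y => /eqP.
    rewrite -[X in _ == X]addr0 => /eqP/addrI/eqP.
    rewrite scaler_eq0 => /orP [/eqP Ht0|Hw0'].
      by move: Ht; rewrite Ht0 ltxx.
    by rewrite Hw0' in Hw0.
  have := Hmin y Hyf Hne.
  have [_ Hyb] := Hyf.
  rewrite !l1norm_pos; last first.
  + by move=> j; case/andP: (Hx0b j).
  + by move=> j; case/andP: (Hyb j).
  under [X in _ < X]eq_bigr do rewrite entryDZ.
  rewrite big_split /= -mulr_sumr.
  have : t * \sum_(i < N) w i 0 <= 0.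
    apply: mulr_ge0_le0; first exact: ltW.
    exact: Hn.
  move=> ?; lra.
Qed.
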